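(* There is a functionally Hausdorff, pseudocompact, first countable semigroup topology $\theta$ on the unit circle $\mathbb T=\{z\in\mathbb C:|z|=1\}$ (as a multiplicative group) which is not a group topology.
   Context: A semigroup topology on a group is a topology making the group multiplication continuous; a group topology additionally makes inversion continuous. A space is functionally Hausdorff if continuous real-valued functions separate its points. A space is pseudocompact if every locally finite family of nonempty open subsets is finite. *)

(* Defs.v *)
From Stdlib Require Import Reals List Lra.
From Coquelicot Require Import Coquelicot.
Open Scope R_scope.

Definition circle : Type := {z : C | Cmod z = 1}.

Lemma circle_mul_proof (a b : circle) :
  Cmod (Cmult (proj1_sig a) (proj1_sig b)) = 1.
Proof.
  destruct a as [a Ha], b as [b Hb]; simpl.
  rewrite Cmod_mult, Ha, Hb; ring.
Qed.

Definition cmul (a b : circle) : circle :=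
  exist _ (Cmult (proj1_sig a) (proj1_sig b)) (circle_mul_proof a b).

Lemma circle_inv_proof (a : circle) : Cmod (Cinv (proj1_sig a)) = 1.
Proof.
  destruct a as [a Ha]; simpl.
  assert (a <> 0%C) as H.
  { intro E; subst a; rewrite Cmod_0 in Ha; lra. }
  rewrite Cmod_inv by exact H. rewrite Ha; field.
Qed.

Definition cinv (a : circle) : circle :=
  exist _ (Cinv (proj1_sig a)) (circle_inv_proof a).

Definition is_topology {X : Type} (O : (X -> Prop) -> Prop) : Prop :=
  O (fun _ => True) /\
  (forall F : (X -> Prop) -> Prop, (forall U, F U -> O U) ->
      O (fun x => exists U, F U /\ U x)) /\
  (forall U V, O U -> O V -> O (fun x => U x /\ V x)).

Definition finite_family {X : Type} (F : (X -> Prop) -> Prop) : Prop :=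
  exists l : list (X -> Prop), forall A, F A -> In A l.

Definition locally_finite {X : Type} (O : (X -> Prop) -> Prop)
  (F : (X -> Prop) -> Prop) : Prop :=
  forall x, exists U, O U /\ U x /\
    finite_family (fun A => F A /\ exists y, A y /\ U y).

Definition pseudocompact {X : Type} (O : (X -> Prop) -> Prop) : Prop :=
  forall F : (X -> Prop) -> Prop,
    (forall U, F U -> O U /\ exists x, U x) ->
    locally_finite O F -> finite_family F.

Definition continuous_real {X : Type} (O : (X -> Prop) -> Prop)
  (f : X -> R) : Prop :=
  forall x (eps : R), 0 < eps ->
    exists U, O U /\ U x /\ forall y, U y -> Rabs (f y - f x) < eps.

Definition functionally_hausdorff {X : Type} (O : (X -> Prop) -> Prop) : Prop :=
  forall x y : X, x <> y ->
    exists f : X -> R, continuous_real O f /\ f x <> f y.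

Definition first_countable {X : Type} (O : (X -> Prop) -> Prop) : Prop :=
  forall x : X, exists B : nat -> (X -> Prop),
    (forall n, O (B n) /\ B n x) /\
    (forall U, O U -> U x -> exists n, forall y, B n y -> U y).

Definition mul_continuous (O : (circle -> Prop) -> Prop) : Prop :=
  forall x y W, O W -> W (cmul x y) ->
    exists U V, O U /\ O V /\ U x /\ V y /\
      forall u v, U u -> V v -> W (cmul u v).

Definition inv_continuous (O : (circle -> Prop) -> Prop) : Prop :=
  forall W, O W -> O (fun x => W (cinv x)).

Definition is_semigroup_topology (O : (circle -> Prop) -> Prop) : Prop :=
  is_topology O /\ mul_continuous O.

Definition is_group_topology (O : (circle -> Prop) -> Prop) : Prop :=
  is_topology O /\ mul_continuous O /\ inv_continuous O.

(* Main.v *)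
Require Import Defs.
From Stdlib Require Import Reals Lra Lia ZArith List Classical.
From Coquelicot Require Import Coquelicot.
From mathcomp Require classical_sets.
Open Scope R_scope.

Lemma Z_no_sqrt2 : forall n : nat, forall q p : Z, (0 < q)%Z -> (Z.to_nat q < n)%nat -> (p * p <> 2 * q * q)%Z.
Proof.
  induction n as [|n IH]; intros q p Hq Hn E; [lia|].
  destruct (Z.Even_or_Odd p) as [[k Hk]|[k Hk]]; subst p.
  - assert (E2 : (q * q = 2 * k * k)%Z) by nia.
    destruct (Z.Even_or_Odd q) as [[m Hm]|[m Hm]]; subst q.
    + assert (E3 : (k * k = 2 * m * m)%Z) by nia.
      apply (IH m k); try lia.
    + nia.
  - nia.
Qed.

Definition Qs (r : R) : Prop := exists p q : Z, q <> 0%Z /\ r = IZR p / IZR q.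

Lemma Qs_Z (m : Z) : Qs (IZR m).
Proof. exists m, 1%Z. split; [lia|]. field. Qed.

Lemma Qs_plus r s : Qs r -> Qs s -> Qs (r + s).
Proof.
  intros [p [q [Hq ->]]] [p' [q' [Hq' ->]]].
  exists (p * q' + p' * q)%Z, (q * q')%Z. split; [lia|].
  rewrite plus_IZR, !mult_IZR. field. split; apply not_0_IZR; auto.
Qed.

Lemma Qs_mult r s : Qs r -> Qs s -> Qs (r * s).
Proof.
  intros [p [q [Hq ->]]] [p' [q' [Hq' ->]]].
  exists (p * p')%Z, (q * q')%Z. split; [lia|].
  rewrite !mult_IZR. field. split; apply not_0_IZR; auto.
Qed.

Lemma Qs_inv r : Qs r -> r <> 0 -> Qs (/ r).
Proof.
  intros [p [q [Hq ->]]] Hr.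
  assert (p <> 0%Z). { intro; subst p. apply Hr. unfold Rdiv. rewrite Rmult_0_l. reflexivity. }
  exists q, p. split; auto. field. split; apply not_0_IZR; auto.
Qed.

Lemma sqrt2_irr : ~ Qs (sqrt 2).
Proof.
  intros [p [q [Hq E]]].
  assert (E2 : IZR (p * p) = IZR (2 * q * q)).
  { rewrite !mult_IZR. assert (Hs : sqrt 2 * sqrt 2 = 2) by (apply sqrt_sqrt; lra).
    rewrite E in Hs. apply not_0_IZR in Hq.
    replace (IZR 2) with 2 by reflexivity.
    assert (Hq2 : IZR q * IZR q <> 0) by (apply Rmult_integral_contrapositive; auto).
    replace (IZR p / IZR q * (IZR p / IZR q)) with ((IZR p * IZR p) / (IZR q * IZR q)) in Hs by (field; auto).
    apply (Rmult_eq_compat_r (IZR q * IZR q)) in Hs.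
    unfold Rdiv in Hs. rewrite Rmult_assoc, Rinv_l in Hs by auto. lra. }
  apply eq_IZR in E2.
  apply (Z_no_sqrt2 (S (Z.to_nat (Z.abs q))) (Z.abs q) (Z.abs p)); try lia.
Qed.

Lemma my_zorn (T:Type) (P : (T->Prop)->Prop) :
  (forall F : (T -> Prop) -> Prop, (forall X, F X -> P X) ->
     (forall X Y, F X -> F Y -> (forall t, X t -> Y t) \/ (forall t, Y t -> X t)) ->
     P (fun t => exists2 X, F X & X t)) ->
  exists A, P A /\ forall B, (forall t, A t -> B t) -> ~ (forall t, B t -> A t) -> ~ P B.
Proof.
  intros H.
  destruct (@classical_sets.Zorn_bigcup T P) as [A [PA HA]].
  - intros F HF Htot. apply H; auto.
  - exists A; split; auto. intros B H1 H2. apply HA. split; auto.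
Qed.

Definition alpha := 2 * PI.
Definition beta := 2 * PI * sqrt 2.

Definition G0 (t : R * R) : Prop :=
  exists a b, Qs a /\ Qs b /\ fst t = a * alpha + b * beta /\ snd t = b.

Definition good (G : R * R -> Prop) : Prop :=
  (forall t, G0 t -> G t) /\
  (forall a b, G a -> G b -> G (fst a + fst b, snd a + snd b)) /\
  (forall q a, Qs q -> G a -> G (q * fst a, q * snd a)) /\
  (forall y, G (0, y) -> y = 0).

Definition PZ (G : R * R -> Prop) : Prop := (forall t, ~ G t) \/ good G.

Lemma PZ_good G t : PZ G -> G t -> good G.
Proof. intros [H|H] Ht; [exfalso; eapply H; eauto | auto]. Qed.

Lemma alpha_pos : 0 < alpha.
Proof. unfold alpha. pose proof PI_RGT_0. lra. Qed.

Lemma G0_good : good G0.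
Proof.
  split; [|split; [|split]].
  - auto.
  - intros [x y] [x' y'] [a [b [Ha [Hb [E1 E2]]]]] [a' [b' [Ha' [Hb' [E1' E2']]]]].
    simpl in *. exists (a + a'), (b + b'). repeat split; try apply Qs_plus; auto; simpl; subst; ring.
  - intros q [x y] Hq [a [b [Ha [Hb [E1 E2]]]]]. simpl in *.
    exists (q * a), (q * b). repeat split; try apply Qs_mult; auto; simpl; subst; ring.
  - intros y [a [b [Ha [Hb [E1 E2]]]]]. simpl in *. subst y.
    destruct (Req_dec b 0) as [Hb0|Hb0]; auto. exfalso. apply sqrt2_irr.
    assert (E : sqrt 2 = (- a) * / b).
    { unfold alpha, beta in E1. pose proof PI_RGT_0.
      apply (Rmult_eq_reg_l (2 * PI * b)); [|apply Rmult_integral_contrapositive; split; lra].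
      field_simplify; auto. lra. }
    rewrite E. apply Qs_mult.
    + replace (- a) with (IZR (-1) * a) by (simpl; ring). apply Qs_mult; auto. apply Qs_Z.
    + apply Qs_inv; auto.
Qed.

Lemma Qs_0 : Qs 0.
Proof. apply (Qs_Z 0). Qed.

Lemma exists_phi : exists A : R * R -> Prop, good A /\ forall x, exists y, A (x, y).
Proof.
  destruct (my_zorn (R * R) PZ) as [A [PA HA]].
  - intros F HF Htot.
    destruct (classic (exists X t, F X /\ X t)) as [[X0 [t0 [FX0 Xt0]]]|Hn].
    + right. split; [|split; [|split]].
      * intros t Ht. exists X0; auto. apply (PZ_good X0 t0 (HF _ FX0) Xt0). auto.
      * intros a b [X FX Xa] [Y FY Yb].
        destruct (Htot X Y FX FY) as [HXY|HYX].
        -- exists Y; auto. apply (PZ_good Y b (HF _ FY) Yb); auto.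
        -- exists X; auto. apply (PZ_good X a (HF _ FX) Xa); auto.
      * intros q a Hq [X FX Xa]. exists X; auto. apply (PZ_good X a (HF _ FX) Xa); auto.
      * intros y [X FX Xy]. apply (PZ_good X _ (HF _ FX) Xy); auto.
    + left. intros t [X FX Xt]. apply Hn. exists X, t. auto.
  - assert (gA : good A).
    { destruct PA as [Hem|gA]; auto. exfalso.
      apply (HA G0); [intros t Ht; exfalso; eapply Hem; eauto | | right; apply G0_good].
      intro H. apply (Hem (0,0)). apply H. exists 0, 0. pose proof Qs_0. repeat split; auto; simpl; ring. }
    exists A. split; auto.
    intros x0. apply NNPP. intro Hno.
    assert (Hno' : forall y, ~ A (x0, y)) by (intros y Hy; apply Hno; eauto).
    destruct gA as [g0 [gplus [gscal gfun]]].
    assert (A00 : A (0, 0)).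
    { apply g0. exists 0, 0. pose proof Qs_0. repeat split; auto; simpl; ring. }
    set (B := fun t : R * R => exists a q, A a /\ Qs q /\ fst t = fst a + q * x0 /\ snd t = snd a).
    apply (HA B).
    + intros [u v] Ht. exists (u, v), 0. repeat split; auto; [apply Qs_0| simpl; ring].
    + intros H. apply (Hno' 0). apply H. exists (0, 0), 1. repeat split; auto.
      * apply (Qs_Z 1).
      * simpl; ring.
    + right. split; [|split; [|split]].
      * intros t Ht. exists t, 0. repeat split; auto. apply Qs_0. ring.
      * intros a b [a1 [q1 [Ha1 [Hq1 [E1 E2]]]]] [b1 [q2 [Hb1 [Hq2 [E3 E4]]]]].
        exists (fst a1 + fst b1, snd a1 + snd b1), (q1 + q2). repeat split; auto.
        -- apply Qs_plus; auto.
        -- simpl. rewrite E1, E3. ring.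
        -- simpl. rewrite E2, E4. ring.
      * intros q a Hq [a1 [q1 [Ha1 [Hq1 [E1 E2]]]]].
        exists (q * fst a1, q * snd a1), (q * q1). repeat split; auto.
        -- apply Qs_mult; auto.
        -- simpl. rewrite E1. ring.
        -- simpl. rewrite E2. ring.
      * intros y [a1 [q1 [Ha1 [Hq1 [E1 E2]]]]]. simpl in E1, E2.
        destruct (Req_dec q1 0) as [Hq0|Hq0].
        -- subst q1. apply gfun. replace (0, y) with a1; auto.
           destruct a1 as [a b]; simpl in *. f_equal; lra.
        -- exfalso. apply (Hno' ((- / q1) * snd a1)).
           replace x0 with ((- / q1) * fst a1).
           ++ apply gscal; auto. replace (- / q1) with (IZR (-1) * / q1) by (simpl; ring).
              apply Qs_mult; [apply Qs_Z | apply Qs_inv; auto].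
           ++ apply (Rmult_eq_reg_l q1); auto. field_simplify; auto. lra.
Qed.

From Stdlib Require Import IndefiniteDescription.

Definition Agr : R * R -> Prop := proj1_sig (constructive_indefinite_description _ exists_phi).
Lemma Agr_good : good Agr.
Proof. exact (proj1 (proj2_sig (constructive_indefinite_description _ exists_phi))). Qed.
Lemma Agr_tot x : exists y, Agr (x, y).
Proof. exact (proj2 (proj2_sig (constructive_indefinite_description _ exists_phi)) x). Qed.

Definition phi (x : R) : R := proj1_sig (constructive_indefinite_description _ (Agr_tot x)).
Lemma phi_spec x : Agr (x, phi x).
Proof. exact (proj2_sig (constructive_indefinite_description _ (Agr_tot x))). Qed.

Lemma Agr_fun x y1 y2 : Agr (x, y1) -> Agr (x, y2) -> y1 = y2.
Proof.
  intros H1 H2. destruct Agr_good as [g0 [gplus [gscal gfun]]].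
  assert (H3 := gscal (IZR (-1)) _ (Qs_Z _) H2). simpl in H3.
  assert (H4 := gplus _ _ H1 H3). simpl in H4.
  replace (x + -1 * x) with 0 in H4 by ring.
  apply gfun in H4. lra.
Qed.

Lemma phi_add x y : phi (x + y) = phi x + phi y.
Proof.
  destruct Agr_good as [g0 [gplus [gscal gfun]]].
  apply (Agr_fun (x + y)); [apply phi_spec|].
  exact (gplus _ _ (phi_spec x) (phi_spec y)).
Qed.

Lemma phi_scal q x : Qs q -> phi (q * x) = q * phi x.
Proof.
  intros Hq. destruct Agr_good as [g0 [gplus [gscal gfun]]].
  apply (Agr_fun (q * x)); [apply phi_spec|].
  exact (gscal _ _ Hq (phi_spec x)).
Qed.

Lemma phi_G0 a b : Qs a -> Qs b -> phi (a * alpha + b * beta) = b.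
Proof.
  intros Ha Hb. destruct Agr_good as [g0 [gplus [gscal gfun]]].
  apply (Agr_fun (a * alpha + b * beta)); [apply phi_spec|].
  apply g0. exists a, b. auto.
Qed.

Lemma phi_alpha_Z m : phi (IZR m * alpha) = 0.
Proof.
  replace (IZR m * alpha) with (IZR m * alpha + 0 * beta) by ring.
  apply phi_G0; [apply Qs_Z | apply Qs_0].
Qed.

Lemma phi_dense e M : 0 < e -> exists t, 0 <= t < e /\ M <= phi t.
Proof.
  intros He.
  destruct (archimed M) as [HM1 HM2].
  set (k := Z.max 0 (up M)).
  assert (Hk : M <= IZR k /\ 0 <= IZR k).
  { unfold k. split.
    - apply Rle_trans with (IZR (up M)); [lra|]. apply IZR_le. lia.
    - apply IZR_le. lia. }
  destruct (archimed (alpha / e)) as [Hm1 Hm2].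
  set (m := up (alpha / e)).
  assert (Hmpos : 0 < IZR m).
  { pose proof alpha_pos. assert (0 < alpha / e) by (apply Rdiv_lt_0_compat; auto). unfold m; lra. }
  set (t0 := IZR k * beta).
  set (j := (up (t0 * IZR m / alpha) - 1)%Z).
  destruct (archimed (t0 * IZR m / alpha)) as [Hj1 Hj2].
  assert (Hj : IZR j <= t0 * IZR m / alpha < IZR j + 1).
  { unfold j. rewrite minus_IZR. simpl. lra. }
  pose proof alpha_pos.
  exists (t0 - (IZR j / IZR m) * alpha). split; [split|].
  - assert (IZR j * alpha <= t0 * IZR m).
    { destruct Hj as [Hj _]. apply (Rmult_le_compat_r alpha) in Hj; [|lra].
      unfold Rdiv in Hj. rewrite Rmult_assoc, Rinv_l in Hj; lra. }
    apply Rmult_le_reg_l with (IZR m); auto.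
    replace (IZR m * (t0 - IZR j / IZR m * alpha)) with (IZR m * t0 - IZR j * alpha) by (field; lra).
    lra.
  - assert (t0 * IZR m < (IZR j + 1) * alpha).
    { destruct Hj as [_ Hj]. apply (Rmult_lt_compat_r alpha) in Hj; [|lra].
      unfold Rdiv in Hj. rewrite Rmult_assoc, Rinv_l in Hj; lra. }
    assert (alpha < e * IZR m).
    { assert (alpha / e < IZR m) by (unfold m; lra).
      apply (Rmult_lt_compat_l e) in H1; auto. unfold Rdiv in H1.
      rewrite <- Rmult_assoc, (Rmult_comm e alpha), Rmult_assoc, Rinv_r in H1; lra. }
    apply Rmult_lt_reg_l with (IZR m); auto.
    replace (IZR m * (t0 - IZR j / IZR m * alpha)) with (IZR m * t0 - IZR j * alpha) by (field; lra).
    lra.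
  - replace (t0 - IZR j / IZR m * alpha) with ((- (IZR j / IZR m)) * alpha + IZR k * beta)
      by (unfold t0; ring).
    rewrite phi_G0; [lra| |apply Qs_Z].
    replace (- (IZR j / IZR m)) with (IZR (- j) / IZR m) by (rewrite opp_IZR; field; lra).
    exists (- j)%Z, m. split; auto. intro Hm0. rewrite Hm0 in Hmpos. lra.
Qed.

Definition fz (z : circle) : R := fst (proj1_sig z).
Definition sz (z : circle) : R := snd (proj1_sig z).

Lemma Cmod_sq (z : C) : Cmod z * Cmod z = fst z * fst z + snd z * snd z.
Proof.
  unfold Cmod. rewrite sqrt_sqrt.
  - simpl. ring.
  - simpl. nra.
Qed.

Lemma circ_sq (z : circle) : fz z * fz z + sz z * sz z = 1.
Proof.
  unfold fz, sz. destruct z as [z Hz]; simpl.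
  rewrite <- Cmod_sq, Hz. ring.
Qed.

Lemma circle_eq (x y : circle) : fz x = fz y -> sz x = sz y -> x = y.
Proof.
  unfold fz, sz. destruct x as [[a b] Hx], y as [[c d] Hy]; simpl. intros -> ->.
  f_equal. apply proof_irrelevance.
Qed.

Lemma angle_exists (z : circle) : exists t, cos t = fz z /\ sin t = sz z.
Proof.
  pose proof (circ_sq z) as H.
  assert (Hb : -1 <= fz z <= 1) by nra.
  assert (Hs : sqrt (1 - (fz z)²) = Rabs (sz z)).
  { replace (1 - (fz z)²) with ((sz z)²) by (unfold Rsqr; lra). apply sqrt_Rsqr_abs. }
  destruct (Rle_dec 0 (sz z)) as [Hp|Hn].
  - exists (acos (fz z)). split; [apply cos_acos; auto|].
    rewrite sin_acos, Hs by auto. apply Rabs_pos_eq; auto.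
  - exists (- acos (fz z)). split.
    + rewrite cos_neg. apply cos_acos; auto.
    + rewrite sin_neg, sin_acos, Hs by auto. rewrite Rabs_left; lra.
Qed.

Definition ang (z : circle) : R := proj1_sig (constructive_indefinite_description _ (angle_exists z)).
Lemma ang_spec z : cos (ang z) = fz z /\ sin (ang z) = sz z.
Proof. exact (proj2_sig (constructive_indefinite_description _ (angle_exists z))). Qed.

Lemma cos_alpha_Z m : cos (IZR m * alpha) = 1.
Proof.
  unfold alpha.
  destruct (Z_le_gt_dec 0 m) as [Hm|Hm].
  - rewrite <- (Z2Nat.id m Hm), <- INR_IZR_INZ.
    pose proof (cos_period 0 (Z.to_nat m)) as H. rewrite Rplus_0_l, cos_0 in H.
    rewrite <- H. f_equal. ring.
  - replace m with (- Z.of_nat (Z.to_nat (- m)))%Z by lia.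
    rewrite opp_IZR, <- INR_IZR_INZ.
    pose proof (cos_period 0 (Z.to_nat (- m))) as H. rewrite Rplus_0_l, cos_0 in H.
    rewrite <- H, <- cos_neg. f_equal. ring.
Qed.

Lemma phi_wd t t' : cos t = cos t' -> sin t = sin t' -> phi t = phi t'.
Proof.
  intros Hc Hs.
  assert (Hcd : cos (t - t') = 1).
  { rewrite cos_minus, Hc, Hs. pose proof (sin2_cos2 t') as H. unfold Rsqr in H. lra. }
  assert (Hsd : sin (t - t') = 0).
  { rewrite sin_minus, Hc, Hs. ring. }
  destruct (sin_eq_0_0 _ Hsd) as [k Hk].
  destruct (Z.Even_or_Odd k) as [[m Hm]|[m Hm]]; subst k.
  - replace t with (t' + IZR m * alpha).
    + rewrite phi_add, phi_alpha_Z. ring.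
    + unfold alpha. rewrite mult_IZR in Hk. simpl in Hk. lra.
  - exfalso. rewrite Hk in Hcd.
    replace (IZR (2 * m + 1) * PI) with (IZR m * alpha + PI) in Hcd
      by (unfold alpha; rewrite plus_IZR, mult_IZR; simpl; ring).
    rewrite cos_plus, cos_alpha_Z, cos_PI, sin_PI in Hcd. lra.
Qed.

Definition psi (z : circle) : R := phi (ang z).

Lemma psi_hom x y : psi (cmul x y) = psi x + psi y.
Proof.
  unfold psi. rewrite <- phi_add. apply phi_wd.
  - destruct (ang_spec (cmul x y)) as [-> _]. rewrite cos_plus.
    destruct (ang_spec x) as [-> ->]. destruct (ang_spec y) as [-> ->].
    unfold fz, sz, cmul. simpl. ring.
  - destruct (ang_spec (cmul x y)) as [_ ->]. rewrite sin_plus.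
    destruct (ang_spec x) as [-> ->]. destruct (ang_spec y) as [-> ->].
    unfold fz, sz, cmul. simpl. ring.
Qed.

Lemma cexp_proof t : Cmod (cos t, sin t) = 1.
Proof.
  unfold Cmod. simpl. pose proof (sin2_cos2 t) as H. unfold Rsqr in H.
  replace (cos t * (cos t * 1) + sin t * (sin t * 1)) with 1 by lra. apply sqrt_1.
Qed.

Definition cexp (t : R) : circle := exist _ (cos t, sin t) (cexp_proof t).

Lemma psi_cexp t : psi (cexp t) = phi t.
Proof.
  unfold psi. apply phi_wd; [apply (proj1 (ang_spec (cexp t))) | apply (proj2 (ang_spec (cexp t)))].
Qed.

Definition one : circle := cexp 0.

Lemma dense_psi e M : 0 < e -> exists w : circle,
  Cmod (proj1_sig w - proj1_sig one) < e /\ M <= psi w.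
Proof.
  intros He. destruct (phi_dense (Rmin e 1) M) as [t [[Ht0 Ht1] HM]].
  { apply Rmin_pos; lra. }
  assert (Hte : t < e) by (pose proof (Rmin_l e 1); lra).
  assert (Ht1' : t < 1) by (pose proof (Rmin_r e 1); lra).
  exists (cexp t). split; [|rewrite psi_cexp; auto].
  assert (Hsq := Cmod_sq (proj1_sig (cexp t) - proj1_sig one)).
  set (c := Cmod (proj1_sig (cexp t) - proj1_sig one)) in *.
  simpl in Hsq. rewrite cos_0, sin_0 in Hsq.
  assert (Hc : cos t = 1 - 2 * sin (t/2) * sin (t/2)).
  { rewrite <- cos_2a_sin. f_equal. field. }
  pose proof (sin2_cos2 t) as H2. unfold Rsqr in H2.
  assert (Hs1 : 0 <= sin (t/2)).
  { apply sin_ge_0; pose proof PI2_1; lra. }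
  assert (Hs2 : sin (t/2) <= t/2).
  { destruct (Req_dec t 0) as [->|Hn].
    - replace (0/2) with 0 by field. rewrite sin_0; lra.
    - left. apply sin_lt_x. lra. }
  pose proof (Cmod_ge_0 (proj1_sig (cexp t) - proj1_sig one)).
  assert (Hcc : c * c = 4 * (sin (t/2) * sin (t/2))).
  { rewrite Hsq. rewrite Hc in H2 |- *. nra. }
  assert (Hss : sin (t/2) * sin (t/2) <= (t/2) * (t/2)) by (apply Rmult_le_compat; lra).
  assert (c * c <= t * t) by nra.
  nra.
Qed.

Definition dd (x y : circle) : R := Cmod (proj1_sig x - proj1_sig y).

Lemma C_ext (a b : C) : fst a = fst b -> snd a = snd b -> a = b.
Proof. destruct a, b; simpl; intros -> ->; reflexivity. Qed.

Lemma dd_tri x y z : dd x z <= dd x y + dd y z.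
Proof.
  unfold dd. eapply Rle_trans; [|apply Cmod_triangle]. right. f_equal.
  apply C_ext; simpl; ring.
Qed.

Lemma dd_refl x : dd x x = 0.
Proof.
  unfold dd. replace (proj1_sig x - proj1_sig x)%C with (RtoC 0).
  - apply Cmod_0.
  - apply C_ext; simpl; ring.
Qed.

Lemma dd_ge0 x y : 0 <= dd x y.
Proof. apply Cmod_ge_0. Qed.

Lemma dd_mul u v x y : dd (cmul u v) (cmul x y) <= dd u x + dd v y.
Proof.
  unfold dd, cmul; simpl.
  replace (proj1_sig u * proj1_sig v - proj1_sig x * proj1_sig y)%C
    with (proj1_sig u * (proj1_sig v - proj1_sig y) + (proj1_sig u - proj1_sig x) * proj1_sig y)%C
    by (apply C_ext; simpl; ring).
  eapply Rle_trans; [apply Cmod_triangle|].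
  rewrite !Cmod_mult. destruct u as [u Hu], y as [y Hy]; simpl. rewrite Hu, Hy. lra.
Qed.

Lemma dd_mul1 x w : dd (cmul x w) x = dd w one.
Proof.
  unfold dd, cmul; simpl.
  replace (proj1_sig x * proj1_sig w - proj1_sig x)%C
    with (proj1_sig x * (proj1_sig w - (cos 0, sin 0)))%C
    by (apply C_ext; simpl; rewrite cos_0, sin_0; ring).
  rewrite Cmod_mult. destruct x as [x Hx]; simpl. rewrite Hx. ring.
Qed.

Lemma dd_fz u x : Rabs (fz u - fz x) <= dd u x.
Proof.
  unfold dd, fz. eapply Rle_trans; [|apply Rmax_Cmod]. eapply Rle_trans; [|apply Rmax_l].
  right. reflexivity.
Qed.

Lemma dd_sz u x : Rabs (sz u - sz x) <= dd u x.
Proof.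
  unfold dd, sz. eapply Rle_trans; [|apply Rmax_Cmod]. eapply Rle_trans; [|apply Rmax_r].
  right. reflexivity.
Qed.

Definition Bl (x : circle) (e : R) (u : circle) : Prop := psi x <= psi u /\ dd u x < e.

Definition theta (U : circle -> Prop) : Prop :=
  forall x, U x -> exists e, 0 < e /\ forall u, Bl x e u -> U u.

Lemma Bl_center x e : 0 < e -> Bl x e x.
Proof. intros He. split; [lra|]. rewrite dd_refl. auto. Qed.

Lemma Bl_open x e : theta (Bl x e).
Proof.
  intros u [H1 H2]. exists (e - dd u x). split; [lra|].
  intros v [H3 H4]. split; [lra|]. pose proof (dd_tri v u x). lra.
Qed.

Lemma Bl_mono x e e' u : e <= e' -> Bl x e u -> Bl x e' u.
Proof. intros He [H1 H2]; split; lra. Qed.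

Lemma theta_topology : is_topology theta.
Proof.
  split; [|split].
  - intros x _. exists 1. split; [lra|]. auto.
  - intros F HF x [U [FU Ux]]. destruct (HF U FU x Ux) as [e [He HU]].
    exists e. split; auto. intros u Hu. exists U. auto.
  - intros U V HU HV x [Ux Vx]. destruct (HU x Ux) as [e1 [He1 H1]].
    destruct (HV x Vx) as [e2 [He2 H2]]. exists (Rmin e1 e2). split; [apply Rmin_pos; auto|].
    intros u Hu. split.
    + apply H1. eapply Bl_mono; [apply Rmin_l|eauto].
    + apply H2. eapply Bl_mono; [apply Rmin_r|eauto].
Qed.

Lemma theta_mul : mul_continuous theta.
Proof.
  intros x y W HW Wxy. destruct (HW _ Wxy) as [e [He HWe]].
  exists (Bl x (e/2)), (Bl y (e/2)).
  split; [apply Bl_open|]. split; [apply Bl_open|].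
  split; [apply Bl_center; lra|]. split; [apply Bl_center; lra|].
  intros u v [Hu1 Hu2] [Hv1 Hv2]. apply HWe. split.
  - rewrite !psi_hom. lra.
  - pose proof (dd_mul u v x y). lra.
Qed.

Lemma theta_fh : functionally_hausdorff theta.
Proof.
  intros x y Hxy.
  destruct (Req_dec (fz x) (fz y)) as [E1|E1].
  - destruct (Req_dec (sz x) (sz y)) as [E2|E2].
    + exfalso. apply Hxy. apply circle_eq; auto.
    + exists sz. split; auto.
      intros z eps Heps. exists (Bl z eps). split; [apply Bl_open|].
      split; [apply Bl_center; auto|]. intros u [_ Hu]. pose proof (dd_sz u z). lra.
  - exists fz. split; auto.
    intros z eps Heps. exists (Bl z eps). split; [apply Bl_open|].
    split; [apply Bl_center; auto|]. intros u [_ Hu]. pose proof (dd_fz u z). lra.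
Qed.

Lemma theta_fc : first_countable theta.
Proof.
  intros x. exists (fun n => Bl x (/ (INR n + 1))). split.
  - intros n. split; [apply Bl_open|]. apply Bl_center.
    apply Rinv_0_lt_compat. pose proof (pos_INR n). lra.
  - intros U HU Ux. destruct (HU x Ux) as [e [He HUe]].
    destruct (archimed_cor1 e He) as [N [HN1 HN2]].
    exists N. intros y Hy. apply HUe. eapply Bl_mono; [|eauto].
    left. eapply Rle_lt_trans; [|apply HN1]. apply Rinv_le_contravar.
    + apply lt_0_INR; auto.
    + lra.
Qed.

Lemma psi_one : psi one = 0.
Proof.
  assert (H := psi_hom one one).
  assert (E : cmul one one = one) by (apply circle_eq; unfold fz, sz, one, cexp, cmul; simpl; rewrite cos_0, sin_0; ring).
  rewrite E in H. lra.
Qed.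

Lemma theta_not_group : ~ is_group_topology theta.
Proof.
  intros [_ [_ Hinv]].
  assert (HW := Hinv (Bl one 1) (Bl_open one 1)).
  assert (E1 : cinv one = one).
  { apply circle_eq; unfold fz, sz, one, cexp, cinv; simpl; rewrite ?cos_0, ?sin_0; field. }
  destruct (HW one) as [e [He He']].
  { rewrite E1. apply Bl_center. lra. }
  destruct (dense_psi e 1 He) as [w [Hw1 Hw2]].
  assert (Hb : Bl one e w).
  { split; [rewrite psi_one; lra | exact Hw1]. }
  destruct (He' w Hb) as [H1 _].
  assert (E2 : cmul w (cinv w) = one).
  { apply circle_eq; unfold fz, sz, one, cexp, cinv, cmul; simpl; rewrite ?cos_0, ?sin_0;
    destruct w as [[a b] Hab]; simpl; unfold Cmod in Hab; simpl in Hab;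
    assert (Hs : a * (a * 1) + b * (b * 1) = 1) by
      (pose proof (sqrt_sqrt (a * (a * 1) + b * (b * 1))) as Hq; rewrite Hab in Hq; nra);
    rewrite Hs; unfold Rdiv; rewrite Rinv_1; nra. }
  assert (H3 := psi_hom w (cinv w)). rewrite E2, psi_one in H3.
  rewrite psi_one in H1. lra.
Qed.

Lemma meet x p e d : 0 < e -> dd x p < d -> exists u, Bl x e u /\ Bl p d u.
Proof.
  intros He Hd.
  destruct (dense_psi (Rmin e (d - dd x p)) (Rmax 0 (psi p - psi x))) as [w [Hw1 Hw2]].
  { apply Rmin_pos; lra. }
  exists (cmul x w).
  pose proof (Rmax_l 0 (psi p - psi x)). pose proof (Rmax_r 0 (psi p - psi x)).
  pose proof (Rmin_l e (d - dd x p)). pose proof (Rmin_r e (d - dd x p)).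
  assert (Hdw : dd (cmul x w) x = dd w one) by apply dd_mul1.
  unfold dd at 2 in Hdw.
  split; split; rewrite ?psi_hom.
  - lra.
  - lra.
  - lra.
  - pose proof (dd_tri (cmul x w) x p). lra.
Qed.

Lemma pigeon (X : Type) (f : nat -> X) : (forall m n, f m = f n -> m = n) ->
  forall l, exists N, forall n, (N <= n)%nat -> ~ In (f n) l.
Proof.
  intros Hinj l. induction l as [|a l [N' HN']].
  - exists O. intros n _ H. inversion H.
  - destruct (classic (exists n0, f n0 = a)) as [[n0 Hn0]|Hno].
    + exists (Nat.max N' (S n0)). intros n Hn [H|H].
      * subst a. apply Hinj in H. lia.
      * apply (HN' n); auto. lia.
    + exists N'. intros n Hn [H|H].
      * apply Hno. eauto.
      * apply (HN' n); auto.
Qed.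

Fixpoint seqL {X : Type} (g : list X -> X) (n : nat) : list X :=
  match n with O => nil | S n => g (seqL g n) :: seqL g n end.

Lemma seqL_in {X : Type} (g : list X -> X) m n : (m < n)%nat -> In (g (seqL g m)) (seqL g n).
Proof.
  induction n as [|n IH]; intros H; [lia|].
  simpl. destruct (Nat.eq_dec m n) as [->|Hne]; [left; auto|right; apply IH; lia].
Qed.

Lemma seqL_inj {X : Type} (g : list X -> X) : (forall l, ~ In (g l) l) ->
  forall m n, g (seqL g m) = g (seqL g n) -> m = n.
Proof.
  intros Hg m n E. destruct (Nat.lt_trichotomy m n) as [H|[H|H]]; auto.
  - exfalso. apply (Hg (seqL g n)). rewrite <- E. apply seqL_in; auto.
  - exfalso. apply (Hg (seqL g m)). rewrite E. apply seqL_in; auto.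
Qed.

Lemma cluster (r : nat -> R) : (forall n, -1 <= r n <= 1) ->
  exists a, -1 <= a <= 1 /\ forall eps, 0 < eps -> forall N, exists n, (N <= n)%nat /\ Rabs (r n - a) < eps.
Proof.
  intros Hr.
  set (E := fun y => forall N, exists n, (N <= n)%nat /\ y <= r n).
  assert (HE1 : forall y, E y -> y <= 1).
  { intros y Hy. destruct (Hy O) as [n [_ Hn]]. pose proof (Hr n). lra. }
  assert (HE2 : E (-1)).
  { intros N. exists N. split; auto. pose proof (Hr N). lra. }
  destruct (completeness E) as [a [Hub Hlub]].
  { exists 1. intros y Hy. apply HE1; auto. }
  { exists (-1). auto. }
  exists a. split; [split|].
  - apply Hub; auto.
  - apply Hlub. intros y Hy. apply HE1; auto.
  - intros eps Heps N.
    assert (Hy1 : exists y, E y /\ a - eps < y).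
    { apply NNPP. intro Hn. assert (a <= a - eps); [|lra].
      apply Hlub. intros y Hy. apply Rnot_lt_le. intro Hlt. apply Hn. eauto. }
    destruct Hy1 as [y [Ey Hy0]].
    assert (H2 : ~ E (a + eps / 2)).
    { intro H. assert (a + eps / 2 <= a) by (apply Hub; auto). lra. }
    assert (H3 : exists N0, forall n, (N0 <= n)%nat -> r n < a + eps / 2).
    { apply NNPP. intro Hn. apply H2. intros M. apply NNPP. intro Hm. apply Hn.
      exists M. intros n Hn'. apply Rnot_le_lt. intro Hle. apply Hm. eauto. }
    destruct H3 as [N0 HN0].
    destruct (Ey (Nat.max N N0)) as [n [Hn1 Hn2]].
    exists n. split; [lia|]. assert (r n < a + eps / 2) by (apply HN0; lia).
    apply Rabs_def1; lra.
Qed.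

Lemma near_aux f s a b d : 0 <= s -> 0 <= b -> f * f + s * s = 1 -> a * a + b * b = 1 ->
  -1 <= f <= 1 -> -1 <= a <= 1 -> 0 < d -> Rabs (f - a) < Rmin 1 (d * d / 4) ->
  (f - a) * (f - a) + (s - b) * (s - b) < d * d.
Proof.
  intros Hs Hb Hf Ha Hf1 Ha1 Hd H.
  pose proof (Rmin_l 1 (d * d / 4)) as Hm1. pose proof (Rmin_r 1 (d * d / 4)) as Hm2.
  set (eta := Rmin 1 (d * d / 4)) in *.
  assert (Hfa : -eta < f - a < eta) by (apply Rabs_def2 in H; lra).
  assert (Hq1 : (f - a) * (f - a) <= eta) by nra.
  assert (Hq2 : (s - b) * (s - b) <= 2 * eta).
  { assert (E : s * s - b * b = (a - f) * (a + f)) by lra.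
    assert (Hb2 : Rabs ((a - f) * (a + f)) <= eta * 2).
    { rewrite Rabs_mult. apply Rmult_le_compat; try apply Rabs_pos.
      - rewrite Rabs_minus_sym. lra.
      - apply Rabs_le. lra. }
    assert (Hq3 : (s - b) * (s - b) <= Rabs (s * s - b * b)).
    { destruct (Rle_dec b s).
      - rewrite Rabs_pos_eq by nra. nra.
      - rewrite Rabs_left by nra. nra. }
    rewrite E in *. lra. }
  lra.
Qed.

Lemma mk_proof a b : a * a + b * b = 1 -> Cmod (a, b) = 1.
Proof.
  intros H. unfold Cmod. simpl. replace (a * (a * 1) + b * (b * 1)) with 1 by lra. apply sqrt_1.
Qed.

Lemma theta_pc : pseudocompact theta.
Proof.
  intros F HF Hlf. apply NNPP. intros Hnf.
  assert (Hex : forall l : list (circle -> Prop), exists A, F A /\ ~ In A l).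
  { intros l. apply NNPP. intro H. apply Hnf. exists l. intros A FA. apply NNPP. intro Hn.
    apply H. eauto. }
  set (g := fun l => proj1_sig (constructive_indefinite_description _ (Hex l))).
  assert (gspec : forall l, F (g l) /\ ~ In (g l) l).
  { intros l. exact (proj2_sig (constructive_indefinite_description _ (Hex l))). }
  set (U := fun n => g (seqL g n)).
  assert (Uinj : forall m n, U m = U n -> m = n).
  { apply seqL_inj. intros l. apply gspec. }
  assert (FU : forall n, F (U n)) by (intros n; apply gspec).
  assert (Hx : forall n, exists x, U n x) by (intros n; apply (HF _ (FU n))).
  set (xs := fun n => proj1_sig (constructive_indefinite_description _ (Hx n))).
  assert (xspec : forall n, U n (xs n)).
  { intros n. exact (proj2_sig (constructive_indefinite_description _ (Hx n))). }
  destruct (cluster (fun n => fz (xs n))) as [a [Ha Hcl]].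
  { intros n. pose proof (circ_sq (xs n)). nra. }
  set (b := sqrt (1 - a * a)).
  assert (Hb0 : 0 <= b) by apply sqrt_pos.
  assert (Hbb : a * a + b * b = 1).
  { unfold b. rewrite sqrt_sqrt; nra. }
  assert (Hbb' : a * a + (- b) * (- b) = 1) by lra.
  set (pp := exist (fun z : C => Cmod z = 1) (a, b) (mk_proof a b Hbb)).
  set (pm := exist (fun z : C => Cmod z = 1) (a, - b) (mk_proof a (- b) Hbb')).
  destruct (Hlf pp) as [Up [oUp [Upp [lp Hlp]]]].
  destruct (Hlf pm) as [Um [oUm [Umm [lm Hlm]]]].
  destruct (oUp pp Upp) as [dp [Hdp HUp]].
  destruct (oUm pm Umm) as [dm [Hdm HUm]].
  destruct (pigeon _ U Uinj lp) as [Np HNp].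
  destruct (pigeon _ U Uinj lm) as [Nm HNm].
  set (d := Rmin dp dm).
  assert (Hd : 0 < d) by (apply Rmin_pos; auto).
  pose proof (Rmin_l dp dm). pose proof (Rmin_r dp dm).
  destruct (Hcl (Rmin 1 (d * d / 4))) with (N := Nat.max Np Nm) as [n [Hn Hrn]].
  { apply Rmin_pos; nra. }
  simpl in Hrn.
  set (u := xs n) in *.
  destruct (HF _ (FU n)) as [oUn _].
  destruct (oUn u (xspec n)) as [e [He HUe]].
  pose proof (circ_sq u) as Hu.
  assert (Hu1 : -1 <= fz u <= 1) by nra.
  destruct (Rle_dec 0 (sz u)) as [Hs|Hs].
  - assert (Hdist : dd u pp < dp).
    { pose proof (near_aux (fz u) (sz u) a b d Hs Hb0 Hu Hbb Hu1 Ha Hd Hrn) as Hna.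
      pose proof (Cmod_sq (proj1_sig u - proj1_sig pp)) as Hc.
      pose proof (dd_ge0 u pp).
      unfold dd in *. change (proj1_sig pp) with (a, b) in *. simpl in Hc. unfold fz, sz in Hna.
      assert (Cmod (proj1_sig u - (a, b)) * Cmod (proj1_sig u - (a, b)) < d * d) by (rewrite Hc; lra).
      unfold d in *. nra. }
    destruct (meet u pp e dp He Hdist) as [v [Hv1 Hv2]].
    apply (HNp n); [lia|]. apply Hlp. split; auto. exists v. split; auto.
  - assert (Hs' : 0 <= - sz u) by lra.
    assert (Hu' : fz u * fz u + (- sz u) * (- sz u) = 1) by lra.
    assert (Hdist : dd u pm < dm).
    { pose proof (near_aux (fz u) (- sz u) a b d Hs' Hb0 Hu' Hbb Hu1 Ha Hd Hrn) as Hna.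
      pose proof (Cmod_sq (proj1_sig u - proj1_sig pm)) as Hc.
      pose proof (dd_ge0 u pm).
      unfold dd in *. change (proj1_sig pm) with (a, - b) in *. simpl in Hc. unfold fz, sz in Hna.
      assert (Cmod (proj1_sig u - (a, - b)) * Cmod (proj1_sig u - (a, - b)) < d * d) by (rewrite Hc; lra).
      unfold d in *. nra. }
    destruct (meet u pm e dm He Hdist) as [v [Hv1 Hv2]].
    apply (HNm n); [lia|]. apply Hlm. split; auto. exists v. split; auto.
Qed.

Theorem proposition7 :
  exists theta : (circle -> Prop) -> Prop,
    is_semigroup_topology theta /\
    functionally_hausdorff theta /\
    pseudocompact theta /\
    first_countable theta /\
    ~ is_group_topology theta.
Proof.
  exists theta. split; [split; [apply theta_topology|apply theta_mul]|].
  split; [apply theta_fh|]. split; [apply theta_pc|]. split; [apply theta_fc|].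
  apply theta_not_group.
Qed.
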